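(* Let $\mathcal V$ be a subvariety of $\mathsf V(S_7)$. Then $S_c(a)\notin\mathcal V$ if and only if $\mathcal V$ satisfies the identity $x^2\approx x$.
   Context: $S_7$ is the ai-semiring on $\{\infty,a,1\}$ with $x+x=x$, $x+y=\infty$ for $x\neq y$, and commutative multiplication with $\infty$ a zero, $a\cdot a=\infty$, $a\cdot 1=a$, $1\cdot1=1$. $\mathsf V(S_7)$ is the variety it generates. $S_c(a)$ is the two-element ai-semiring $\{a,\infty\}$ with $a+\infty=\infty$, $x+x=x$, and all products equal to $\infty$. *)

(* Defs.v *)
Record AISemiring := {
  car :> Type;
  add : car -> car -> car;
  mul : car -> car -> car;
  addA : forall x y z, add x (add y z) = add (add x y) z;
  addC : forall x y, add x y = add y x;
  addI : forall x, add x x = x;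
  mulA : forall x y z, mul x (mul y z) = mul (mul x y) z;
  mulDl : forall x y z, mul (add x y) z = add (mul x z) (mul y z);
  mulDr : forall x y z, mul x (add y z) = add (mul x y) (mul x z)
}.

Inductive term : Type :=
| Var : nat -> term
| Add : term -> term -> term
| Mul : term -> term -> term.

Fixpoint eval (S : AISemiring) (v : nat -> car S) (t : term) : car S :=
  match t with
  | Var n => v n
  | Add t1 t2 => add S (eval S v t1) (eval S v t2)
  | Mul t1 t2 => mul S (eval S v t1) (eval S v t2)
  end.

Definition identity := (term * term)%type.

Definition satisfies (S : AISemiring) (e : identity) : Prop :=
  forall v : nat -> car S, eval S v (fst e) = eval S v (snd e).

Definition models (S : AISemiring) (Sigma : identity -> Prop) : Prop :=
  forall e, Sigma e -> satisfies S e.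

Definition is_variety (V : AISemiring -> Prop) : Prop :=
  exists Sigma : identity -> Prop, forall S, V S <-> models S Sigma.

(** Equational theory of an algebra, and the variety it generates:
    the smallest equational class containing S, i.e. Mod(Id(S)). *)
Definition Id (S : AISemiring) : identity -> Prop := fun e => satisfies S e.
Definition Vgen (S : AISemiring) : AISemiring -> Prop := fun T => models T (Id S).

Definition class_satisfies (V : AISemiring -> Prop) (e : identity) : Prop :=
  forall S, V S -> satisfies S e.

Definition sq_idem : identity := (Mul (Var 0) (Var 0), Var 0).

Inductive S7_car : Type := S7inf | S7a | S7one.

Definition S7_eqb (x y : S7_car) : bool :=
  match x, y with
  | S7inf, S7inf | S7a, S7a | S7one, S7one => true
  | _, _ => false
  end.

Definition S7_add (x y : S7_car) : S7_car := if S7_eqb x y then x else S7inf.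

Definition S7_mul (x y : S7_car) : S7_car :=
  match x, y with
  | S7one, S7one => S7one
  | S7a, S7one | S7one, S7a => S7a
  | _, _ => S7inf
  end.

Definition S7 : AISemiring.
Proof.
  refine (@Build_AISemiring S7_car S7_add S7_mul _ _ _ _ _ _);
  intros; repeat match goal with x : S7_car |- _ => destruct x end; reflexivity.
Defined.

Inductive Sc_car : Type := Sca | Scinf.

Definition Sc_add (x y : Sc_car) : Sc_car :=
  match x, y with
  | Sca, Sca => Sca
  | _, _ => Scinf
  end.

Definition Sc_mul (x y : Sc_car) : Sc_car := Scinf.

Definition Sc_a : AISemiring.
Proof.
  refine (@Build_AISemiring Sc_car Sc_add Sc_mul _ _ _ _ _ _);
  intros; repeat match goal with x : Sc_car |- _ => destruct x end; reflexivity.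
Defined.

(* Main.v *)
Require Import Defs.
From Stdlib Require Import Classical Arith Bool.

Fixpoint hasMul (t : term) : bool :=
  match t with
  | Var _ => false
  | Add a b => hasMul a || hasMul b
  | Mul _ _ => true
  end.

Fixpoint occ (n : nat) (t : term) : bool :=
  match t with
  | Var m => Nat.eqb m n
  | Add a b => occ n a || occ n b
  | Mul a b => occ n a || occ n b
  end.

Fixpoint cst (t : term) : term :=
  match t with
  | Var _ => Var 0
  | Add a b => Add (cst a) (cst b)
  | Mul a b => Mul (cst a) (cst b)
  end.

Lemma eval_cst (S : AISemiring) v t : eval S v (cst t) = eval S (fun _ => v 0) t.
Proof. induction t; simpl; congruence. Qed.

Lemma S7_const c t :
  eval S7 (fun _ => c) t = if hasMul t then S7_mul c c else c.
Proof.
  induction t; simpl; [reflexivity| |]; rewrite IHt1, IHt2;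
  destruct (hasMul t1), (hasMul t2), c; reflexivity.
Qed.

Lemma gen_const (S : AISemiring) s t : hasMul t = false -> eval S (fun _ => s) t = s.
Proof.
  induction t; simpl; try discriminate; auto.
  intro H; apply orb_false_iff in H as [H1 H2]. rewrite IHt1, IHt2 by auto. apply addI.
Qed.

Lemma lemA (S : AISemiring) s t : Vgen S7 S -> hasMul t = true ->
  eval S (fun _ => s) t = mul S s s.
Proof.
  intros HV Ht.
  assert (Hs : satisfies S (cst t, Mul (Var 0) (Var 0))).
  { apply HV. intro v. simpl. rewrite eval_cst, S7_const, Ht. reflexivity. }
  specialize (Hs (fun _ => s)). simpl in Hs. rewrite eval_cst in Hs. exact Hs.
Qed.

Lemma lemB (S : AISemiring) a b n t : hasMul t = false ->
  (occ n t = false -> eval S (fun m => if Nat.eqb m n then a else b) t = b) /\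
  (occ n t = true -> eval S (fun m => if Nat.eqb m n then a else b) t = a \/
                     eval S (fun m => if Nat.eqb m n then a else b) t = add S a b).
Proof.
  induction t; simpl; try discriminate.
  - intros _. split; intro H; rewrite H; auto.
  - intro H; apply orb_false_iff in H as [H1 H2].
    destruct (IHt1 H1) as [F1 T1], (IHt2 H2) as [F2 T2].
    split.
    + intro H; apply orb_false_iff in H as [H3 H4]. rewrite F1, F2 by auto. apply addI.
    + intro H.
      destruct (occ n t1) eqn:E1, (occ n t2) eqn:E2; simpl in H; try discriminate.
      * destruct (T1 eq_refl) as [-> | ->], (T2 eq_refl) as [-> | ->].
        -- left; apply addI.
        -- right; rewrite addA, addI; reflexivity.
        -- right; rewrite (addC S a b), <- addA, addI; reflexivity.
        -- right; apply addI.
      * rewrite F2 by auto. right.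
        destruct (T1 eq_refl) as [-> | ->]; auto.
        rewrite <- addA, addI; reflexivity.
      * rewrite F1 by auto. right.
        destruct (T2 eq_refl) as [-> | ->]. apply addC.
        rewrite addA, (addC S b a), <- addA, addI; reflexivity.
Qed.

Lemma Sc_mul_t v t : hasMul t = true -> eval Sc_a v t = Scinf.
Proof.
  induction t; simpl; try discriminate.
  - intro H; apply orb_true_iff in H as [H|H].
    + rewrite IHt1 by auto. reflexivity.
    + rewrite IHt2 by auto. destruct (eval Sc_a v t1); reflexivity.
  - reflexivity.
Qed.

Lemma Sc_free v t : hasMul t = false ->
  (eval Sc_a v t = Sca <-> forall m, occ m t = true -> v m = Sca).
Proof.
  induction t; simpl; try discriminate.
  - intros _. split.
    + intros H m Hm. apply Nat.eqb_eq in Hm. subst. auto.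
    + intro H. apply H. apply Nat.eqb_refl.
  - intro H; apply orb_false_iff in H as [H1 H2].
    specialize (IHt1 H1); specialize (IHt2 H2).
    split.
    + intros H m Hm.
      destruct (eval Sc_a v t1) eqn:E1, (eval Sc_a v t2) eqn:E2; try discriminate.
      apply orb_true_iff in Hm as [Hm|Hm]; [apply IHt1|apply IHt2]; auto.
    + intro H.
      rewrite (proj2 IHt1), (proj2 IHt2); auto;
      intros m Hm; apply H; rewrite Hm; auto using orb_true_r.
Qed.

Theorem proposition3p3 :
  forall V : AISemiring -> Prop,
    is_variety V ->
    (forall S, V S -> Vgen S7 S) ->
    (~ V Sc_a <-> class_satisfies V sq_idem).
Proof.
  intros V [Sigma HSig] HV. split.
  - intro HnSc. apply NNPP. intro Hns.
    apply HnSc. apply HSig. intros [u w] He.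
    unfold class_satisfies in Hns.
    apply not_all_ex_not in Hns as [S Hns].
    apply imply_to_and in Hns as [HS Hns].
    apply not_all_ex_not in Hns as [v0 Hns].
    set (s := v0 0). simpl in Hns. fold s in Hns. clearbody s.
    assert (HSe : satisfies S (u, w)) by (apply (proj1 (HSig S) HS); auto).
    pose proof (HV S HS) as HVS.
    unfold satisfies; simpl in *. intro v.
    destruct (hasMul u) eqn:Hu, (hasMul w) eqn:Hw.
    + rewrite !Sc_mul_t; auto.
    + exfalso. apply Hns. specialize (HSe (fun _ => s)).
      simpl in HSe; rewrite (lemA S s u HVS Hu), (gen_const S s w Hw) in HSe. congruence.
    + exfalso. apply Hns. specialize (HSe (fun _ => s)).
      simpl in HSe; rewrite (lemA S s w HVS Hw), (gen_const S s u Hu) in HSe. congruence.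
    + destruct (classic (forall m, occ m u = occ m w)) as [Heq | Hne].
      * pose proof (Sc_free v u Hu) as Fu. pose proof (Sc_free v w Hw) as Fw.
        destruct (eval Sc_a v u) eqn:Eu, (eval Sc_a v w) eqn:Ew; try reflexivity.
        -- symmetry; apply Fw. intros m Hm. apply Fu; auto. rewrite Heq; auto.
        -- apply Fu. intros m Hm. apply Fw; auto. rewrite <- Heq; auto.
      * exfalso. apply not_all_ex_not in Hne as [n Hn].
        assert (key : forall a b : car S, a = b \/ add S a b = b).
        { intros a b.
          pose proof (HSe (fun m => if Nat.eqb m n then a else b)) as E; simpl in E.
          destruct (lemB S a b n u Hu) as [Fu Tu], (lemB S a b n w Hw) as [Fw Tw].
          destruct (occ n u) eqn:Ou, (occ n w) eqn:Ow; try congruence.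
          - rewrite (Fw eq_refl) in E. destruct (Tu eq_refl) as [H|H]; rewrite H in E; auto.
          - rewrite (Fu eq_refl) in E. destruct (Tw eq_refl) as [H|H]; rewrite H in E; auto. }
        apply Hns.
        destruct (key s (mul S s s)) as [H1|H1]; auto.
        destruct (key (mul S s s) s) as [H2|H2]; auto.
        rewrite addC in H2. congruence.
  - intros Hc HSc. specialize (Hc Sc_a HSc (fun _ => Sca)). simpl in Hc. discriminate.
Qed.
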